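(* Let $X$ be a regular Type I pseudocompact space and $Y$ any space. Then $X$ is countably compact, and $\mathsf{P}(X,Y)\Leftrightarrow\mathsf{P_{cpt}}(X,Y)$ for each $\mathsf{P}\in\{\mathsf{EC},\mathsf{S},\mathsf{L},\mathsf{BR}\}$.
   Context: All spaces are Hausdorff and maps continuous. A space is pseudocompact if every continuous real-valued function on it is bounded (no further separation axiom assumed). A space $X$ is of Type I if $X=\bigcup_{\alpha<\omega_1}X_\alpha$ with $X_\alpha$ open, $\overline{X_\alpha}\subset X_\beta$ for $\alpha<\beta$, $\overline{X_\alpha}$ Lindelöf, and $X\neq X_\alpha$ for all $\alpha$. For a non-Lindelöf space $X$ and a space $Y$, and for every continuous $f:X\to Y$: $\mathsf{EC}(X,Y)$ asks for a Lindelöf $Z\subset X$ with $f(X\setminus Z)$ a singleton; $\mathsf{S}(X,Y)$ asks for a Lindelöf $Z\subset X$ and a retraction $r:X\to Z$ with $f\circ r=f$; $\mathsf{L}(X,Y)$ asks for a Lindelöf $Z$ with $f(Z)=f(X)$; $\mathsf{BR}(X,Y)$ asks for a Lindelöf $Z$ with $f(X\setminus W)=f(X\setminus Z)$ for every Lindelöf $W\supseteq Z$. $\mathsf{P_{cpt}}$ is obtained from $\mathsf{P}$ by replacing every occurrence of ''Lindelöf'' by ''compact'' (including for $W$ in $\mathsf{BR}$). *)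

(* Defs.v *)
From HB Require Import structures.
From mathcomp Require Import all_boot all_order all_algebra.
From mathcomp Require Import all_classical all_reals all_analysis.
From mathcomp Require Import Rstruct Rstruct_topology.


Set Implicit Arguments.
Unset Strict Implicit.
Unset Printing Implicit Defensive.

Import Order.TTheory GRing.Theory Num.Theory.
Local Open Scope classical_set_scope.
Local Open Scope ring_scope.

(* A (possibly non-open) subset A of T is Lindelof (as a subspace): every
   cover of A by open sets of T has a countable subcover.  This mirrors the
   library's [cover_compact]. *)
Definition lindelof {T : topologicalType} (A : set T) :=
  forall (I : choiceType) (D : set I) (f : I -> set T),
    (forall i, D i -> open (f i)) -> A `<=` \bigcup_(i in D) f i ->
    exists2 D' : set I, D' `<=` D /\ countable D' & A `<=` \bigcup_(i in D') f i.

(* Countably compact: every countable open cover of the space has a finite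
   subcover (countable covers are enumerated by nat, repetitions allowed). *)
Definition countably_compact (T : topologicalType) :=
  forall f : nat -> set T, (forall n, open (f n)) ->
    [set: T] `<=` \bigcup_n f n ->
    exists n : nat, [set: T] `<=` \bigcup_(i in [set k : nat | (k < n)%N]) f i.

Definition pseudocompact (T : topologicalType) :=
  forall f : T -> Rdefinitions.R, continuous f ->
    exists M : Rdefinitions.R, forall x, `|f x| <= M.

(* (I, lt) is (order-isomorphic to) the first uncountable ordinal omega_1:
   a strict well-order which is uncountable but all of whose proper initial
   segments are countable. *)
Definition omega1_order (I : Type) (lt : I -> I -> Prop) :=
  well_founded lt /\
  [/\ (forall a, ~ lt a a),
      (forall a b c, lt a b -> lt b c -> lt a c),
      (forall a b, [\/ lt a b, a = b | lt b a]),
      ~ countable [set: I] &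
      (forall a, countable [set b | lt b a])].

Definition typeI (X : topologicalType) :=
  exists (I : Type) (lt : I -> I -> Prop) (Xs : I -> set X),
    omega1_order lt /\
    [/\ (forall a, open (Xs a)),
        (forall a b, lt a b -> closure (Xs a) `<=` Xs b),
        (forall a, lindelof (closure (Xs a))),
        [set: X] = \bigcup_(a in [set: I]) Xs a &
        (forall a, Xs a <> [set: X])].

Section Props.
Variables (X Y : topologicalType) (small : set X -> Prop).

Definition EC_prop :=
  forall f : X -> Y, continuous f ->
    exists Z : set X, small Z /\ exists y : Y, f @` (~` Z) = [set y].

Definition S_prop :=
  forall f : X -> Y, continuous f ->
    exists Z : set X, small Z /\
      exists r : X -> X, [/\ continuous r, (forall x, Z (r x)),
                             (forall z, Z z -> r z = z) &
                             (forall x, f (r x) = f x)].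

Definition L_prop :=
  forall f : X -> Y, continuous f ->
    exists Z : set X, small Z /\ f @` Z = f @` [set: X].

Definition BR_prop :=
  forall f : X -> Y, continuous f ->
    exists Z : set X, small Z /\
      forall W : set X, small W -> Z `<=` W -> f @` (~` W) = f @` (~` Z).
End Props.

Definition EC X Y := @EC_prop X Y lindelof.
Definition EC_cpt X Y := @EC_prop X Y compact.
Definition S X Y := @S_prop X Y lindelof.
Definition S_cpt X Y := @S_prop X Y compact.
Definition L X Y := @L_prop X Y lindelof.
Definition L_cpt X Y := @L_prop X Y compact.
Definition BR X Y := @BR_prop X Y lindelof.
Definition BR_cpt X Y := @BR_prop X Y compact.

(* Main.v *)
Require Import Defs.
From HB Require Import structures.
From mathcomp Require Import all_boot all_order all_algebra.
From mathcomp Require Import all_classical all_reals all_analysis.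
From mathcomp Require Import Rstruct Rstruct_topology finmap lra.
Set Implicit Arguments.
Unset Strict Implicit.
Unset Printing Implicit Defensive.
Import Order.TTheory GRing.Theory Num.Theory.
Local Open Scope classical_set_scope.
Local Open Scope ring_scope.
Lemma countableU1 (T : Type) (A : set T) (s : T) :
  countable A -> countable (A `|` [set s]).
Proof.
move=> /countable_injP [f finj]; apply/countable_injP.
exists (fun b => if pselect (b = s) then 0%N else (f b).+1).
move=> x y /set_mem Ax /set_mem Ay.
case: pselect => [xs|nxs]; case: pselect => [ys|nys] //.
- by move=> _; rewrite xs ys.
- by case: Ax => // Ax; case: Ay => // Ay [] /finj; apply; apply: mem_set.
Qed.

Lemma omega1_bound (I : Type) (lt : I -> I -> Prop) (S : set I) :
  omega1_order lt -> countable S -> exists b, forall s, S s -> lt s b.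
Proof.
move=> [_ [irr tr tri ncI cseg]] cS.
pose U := \bigcup_(s in S) ([set b | lt b s] `|` [set s]).
have cU : countable U.
  by apply: bigcup_countable => // s _; apply: countableU1.
have [b nUb] : exists b, ~ U b.
  apply/not_existsP => /= H; apply: ncI.
  by apply: sub_countable cU; apply: subset_card_le => x _; apply: contrapT; apply: H.
exists b => s Ss; have [bs|bs|//] := tri b s.
- by exfalso; apply: nUb; exists s => //; left.
- by exfalso; apply: nUb; exists s => //; right.
Qed.
Lemma countable_enum T (D : set T) : countable D ->
  D = set0 \/ exists e : nat -> T, (forall n, D (e n)) /\ D `<=` range e.
Proof.
move=> /pfcard_geP [->|[f]]; [by left|right].
exists f; split.
  by move=> n; apply: funS.
move=> x Dx.
have := surj (f := f) Dx.
by move=> [n _ <-]; exists n.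
Qed.
Section PC.
Context (X : topologicalType) (x0 : X).
Definition pX : Type := X.
HB.instance Definition _ := Topological.copy pX X.
HB.instance Definition _ := isPointed.Build pX x0.
Lemma compact_coverX (A : set X) : compact A = cover_compact (A : set pX).
Proof. rewrite -(compact_cover pX). reflexivity. Qed.
End PC.
Lemma compact_coverX' (X : topologicalType) (A : set X) : compact A <-> cover_compact A.
Proof.
have [[a _]|nA] := pselect (exists a, A a).
  by rewrite (compact_coverX a); split => h; exact: h.
have -> : A = set0 by apply/seteqP; split => x // Ax; apply: nA; exists x.
split=> _; first by move=> I D f _ _; exists fset0 => // x.
exact: compact0.
Qed.

Section Lind.
Context {X : topologicalType}.

Lemma lindelof_closed_sub (K A : set X) :
  lindelof K -> closed A -> A `<=` K -> lindelof A.
Proof.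
move=> lK cA AK I D f fo Acov.
pose g (o : option I) := if o is Some i then f i else ~` A.
pose D2 := [set o | if o is Some i then D i else True].
have [] := lK _ D2 g.
  by case=> [i|] /= Di; [apply: fo|apply: closed_openC].
  move=> x Kx; have [Ax|nAx] := pselect (A x).
    by have [i Di fxi] := Acov x Ax; exists (Some i).
  by exists None.
move=> D' [D'D2 cD'] KD'.
exists [set i : I | D' (Some i)]; first split.
- by move=> i /D'D2.
- move: cD' => /countable_injP [h hinj]; apply/countable_injP.
  exists (h \o Some) => x y /set_mem Dx /set_mem Dy /= /hinj.
  by move=> /(_ (mem_set Dx) (mem_set Dy)) [].
- move=> x Ax; have [[i|] /= Di gx] := KD' x (AK x Ax).
    by exists i.
  by [].
Qed.

Lemma compact_lindelof (A : set X) : compact A -> lindelof A.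
Proof.
move=> /compact_coverX' cA I D f fo Acov.
have [D' D'D AD'] := cA I D f fo Acov.
exists [set` D']; first split.
- by move=> i iD'; apply/set_mem/D'D.
- exact: countable_fset.
- exact: AD'.
Qed.

Lemma cc_lindelof_compact (A : set X) : countably_compact X ->
  closed A -> lindelof A -> compact A.
Proof.
move=> ccX cA lA; apply/compact_coverX' => I D f fo Acov.
have [D' [D'D cD'] AD'] := lA I D f fo Acov.
have [D'0|[e [eD' D're]]] := countable_enum cD'.
  exists fset0 => //.
  by move=> x /AD' [i]; rewrite D'0.
have [] := ccX (fun n => f (e n) `|` ~` A).
- move=> n; apply: openU; first by apply: fo; apply: D'D.
  exact: closed_openC.
- move=> x _; have [Ax|nAx] := pselect (A x).
    have [i Di fxi] := AD' x Ax.
    by have [n _ ni] := D're i Di; exists n => //; left; rewrite ni.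
  by exists 0%N => //; right.
move=> N XN.
have : finite_set (e @` [set k : nat | (k < N)%N]).
  by apply: finite_image; exact: finite_II.
move=> /finite_fsetP [F FE].
exists F.
  move=> i iF; have : [set` F] i by [].
  by rewrite -FE => -[k _ <-]; apply/mem_set/D'D.
move=> x Ax; have [k kN [fx|//]] := XN x Logic.I.
exists (e k) => //; have : (e @` [set k : nat | (k < N)%N]) (e k) by exists k.
by rewrite FE.
Qed.

End Lind.

Section Normal.
Context {X : topologicalType}.

Lemma closure_disj (U V : set X) : open V -> U `&` V = set0 ->
  closure U `&` V = set0.
Proof.
move=> oV UV; apply/disjoints_subset.
have cV : closed (~` V) by apply: open_closedC.
rewrite (closure_id (~` V)).1 //; apply: closureS.
by apply/disjoints_subset.
Qed.

Lemma one_sided (K A B : set X) : regular_space X -> lindelof K ->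
  closed A -> A `<=` K -> closed B -> A `&` B = set0 ->
  exists u : nat -> set X, [/\ forall n, open (u n),
    A `<=` \bigcup_n u n & forall n, closure (u n) `&` B = set0].
Proof.
move=> rX lK cA AK cB AB.
have H a : exists W : set X, open W /\ (A a -> W a /\ closure W `&` B = set0).
  have [Aa|nAa] := pselect (A a); last first.
    by exists set0; split => //; exact: open0.
  have nBa : ~ B a by move=> Ba; have : (A `&` B) a by [] ; rewrite AB.
  have [U [V [oU oV Ua BV UV]]] := (regular_openP a).1 (rX a) B cB nBa.
  exists U; split => // _; split => //.
  apply/disjoints_subset => x cUx Bx.
  have := closure_disj oV UV; move/disjoints_subset => /(_ x cUx); apply.
  exact: BV.
have [W HW] := choice H.
have lA := lindelof_closed_sub lK cA AK.
have [D' [D'A cD'] AD'] := lA X A W (fun a _ => (HW a).1) (fun a Aa => ex_intro2 _ _ a Aa ((HW a).2 Aa).1).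
have [D'0|[e [eD' D're]]] := countable_enum cD'.
  exists (fun=> set0); split => //.
  - by move=> _; exact: open0.
  - by move=> x /AD' [i]; rewrite D'0.
  - by move=> n; rewrite closure0 set0I.
exists (fun n => W (e n)); split.
- by move=> n; exact: (HW _).1.
- move=> x /AD' [i Di Wix]; have [n _ ni] := D're i Di.
  by exists n => //; rewrite ni.
- by move=> n; exact: ((HW _).2 (D'A _ (eD' n))).2.
Qed.

Lemma rel_normal (K A B : set X) : regular_space X -> lindelof K ->
  closed A -> A `<=` K -> closed B -> B `<=` K -> A `&` B = set0 ->
  exists U V : set X, [/\ open U, open V, A `<=` U, B `<=` V & U `&` V = set0].
Proof.
move=> rX lK cA AK cB BK AB.
have [u [uo Au uB]] := one_sided rX lK cA AK cB AB.
have BA : B `&` A = set0 by rewrite setIC.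
have [w [wo Bw wA]] := one_sided rX lK cB BK cA BA.
pose Cu n := \bigcup_(k in [set k : nat | (k < n.+1)%N]) closure (u k).
pose Cw n := \bigcup_(k in [set k : nat | (k < n.+1)%N]) closure (w k).
have cCu n : closed (Cu n).
  by apply: closed_bigcup; [exact: finite_II|move=> k _; exact: closed_closure].
have cCw n : closed (Cw n).
  by apply: closed_bigcup; [exact: finite_II|move=> k _; exact: closed_closure].
exists (\bigcup_n (u n `\` Cw n)), (\bigcup_n (w n `\` Cu n)); split.
- by apply: bigcup_open => n _; apply: openI => //; exact: closed_openC.
- by apply: bigcup_open => n _; apply: openI => //; exact: closed_openC.
- move=> a Aa; have [n _ una] := Au a Aa; exists n => //; split => //.
  move=> [k _ cwk]; have : (closure (w k) `&` A) a by [].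
  by rewrite wA.
- move=> b Bb; have [n _ wnb] := Bw b Bb; exists n => //; split => //.
  move=> [k _ cuk]; have : (closure (u k) `&` B) b by [].
  by rewrite uB.
- apply/disjoints_subset => y [n _ [uny nCwy]] [m _ [wmy nCuy]].
  have [mn|nm] := leqP m n.
    by apply: nCwy; exists m => //; apply: subset_closure.
  by apply: nCuy; exists n => //=; [exact: ltnW | apply: subset_closure].
Qed.


Lemma subspace_normal (K : set X) : regular_space X -> lindelof K -> closed K ->
  normal_space (subspace K).
Proof.
move=> rX lK cK; apply/(@normal_openP Rdefinitions.R) => A B cA cB AB.
have [A0 cA0 A0K] := (closed_subspaceP _ _).1 cA.
have [B0 cB0 B0K] := (closed_subspaceP _ _).1 cB.
have cAK : closed (A `&` K : set X) by rewrite -A0K; exact: closedI.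
have cBK : closed (B `&` K : set X) by rewrite -B0K; exact: closedI.
have ABK : (A `&` K) `&` (B `&` K) = set0.
  by apply/disjoints_subset => x [Ax _] [Bx _]; have : (A `&` B) x by []; rewrite AB.
have [U1 [V1 [oU1 oV1 AU1 BV1 UV1]]] :=
  rel_normal rX lK cAK (@subIsetr _ _ _) cBK (@subIsetr _ _ _) ABK.
exists ((U1 `&` K) `|` (A `&` ~` K)), ((V1 `&` K) `|` (B `&` ~` K)); split.
- rewrite -open_subspaceIT.
  have -> : ((U1 `&` K) `|` (A `&` ~` K)) `&` K = U1 `&` K.
    apply/seteqP; split => x.
      by case=> [[[? ?]|[_ nK]] Kx].
    by case=> ? ?; split => //; left.
  by rewrite open_subspaceIT; apply: open_subspaceW.
- rewrite -open_subspaceIT.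
  have -> : ((V1 `&` K) `|` (B `&` ~` K)) `&` K = V1 `&` K.
    apply/seteqP; split => x.
      by case=> [[[? ?]|[_ nK]] Kx].
    by case=> ? ?; split => //; left.
  by rewrite open_subspaceIT; apply: open_subspaceW.
- move=> x Ax; have [Kx|nKx] := pselect (K x); [left|right] => //.
  by split => //; apply: AU1.
- move=> x Bx; have [Kx|nKx] := pselect (K x); [left|right] => //.
  by split => //; apply: BV1.
- apply/disjoints_subset => x [[U1x Kx]|[Ax nKx]] [[V1x _]|[Bx nKx']] //.
  + by have : (U1 `&` V1) x by []; rewrite UV1.
  + by have : (A `&` B) x by []; rewrite AB.
Qed.

End Normal.
Lemma within_discrete (T U : topologicalType) (D : set T) (f : T -> U) :
  (forall y, D y -> exists O, [/\ open O, O y & forall z, O z -> D z -> z = y]) ->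
  {within D, continuous f}.
Proof.
move=> H; rewrite continuous_subspace_in => y /set_mem Dy.
have [V [oV Vy VD]] := H y Dy.
move=> W Wfy.
change (nbhs (y : subspace D) (f @^-1` W)).
apply/(@nbhs_subspace_ex T D (f @^-1` W) y Dy).
exists (V `|` (f @^-1` W `&` D)).
  by apply: filterS (open_nbhs_nbhs (conj oV Vy)) => z Vz; left.
apply/seteqP; split => z.
  by move=> [fz Dz]; split => //; right.
case=> [[Vz|[fz _]] Dz]; split => //.
by rewrite (VD z Vz Dz) /=; apply: nbhs_singleton.
Qed.


Section CC.
Context (X : topologicalType) (hX : hausdorff_space X) (rX : regular_space X)
  (I : Type) (lt : I -> I -> Prop) (Xs : I -> set X)
  (om : omega1_order lt) (Xso : forall a, open (Xs a))
  (Xsc : forall a b, lt a b -> closure (Xs a) `<=` Xs b)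
  (Xsl : forall a, lindelof (closure (Xs a)))
  (XsU : [set: X] = \bigcup_(a in [set: I]) Xs a)
  (pX : pseudocompact X).

Lemma typeI_cc : countably_compact X.
Proof.
move=> U Uo Ucov; apply: contrapT => nfin.
have hx n : exists x, forall k, (k < n.+1)%N -> ~ U k x.
  apply: contrapT => H; apply: nfin; exists n.+1 => y _.
  apply: contrapT => Hy; apply: H; exists y => k kn Uky; apply: Hy.
  by exists k.
have [x hxn] := choice hx.
have hN y : exists k, U k y by have [k _ Uky] := Ucov y Logic.I; exists k.
have [N hNy] := choice hN.
pose D := range x.
have xN n : (n < N (x n))%N.
  by rewrite ltnNge; apply/negP => /(hxn n) /(_ (hNy (x n))).
have iso y : exists V, [/\ open V, V y & forall z, V z -> D z -> z = y].
  pose F := \bigcup_(m in [set m | (m < N y)%N /\ x m <> y]) [set x m].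
  exists (U (N y) `&` ~` F); split.
  - apply: openI => //; apply: closed_openC; apply: closed_bigcup.
      by apply: (sub_finite_set _ (finite_II (N y))) => m [].
    by move=> m _; apply: accessible_closed_set1; apply: hausdorff_accessible.
  - by split => //; move=> [m [_ xmy] ymx]; apply/xmy/esym.
  - move=> z [Uz nFz] [m _ xmz]; apply: contrapT => zy; apply: nFz.
    exists m => //; split; last by rewrite xmz.
    rewrite ltnNge; apply/negP => Nm.
    by apply: (hxn m (N y)) => //; rewrite xmz.
have cD : closed D.
  move=> y Dy; have [V [oV Vy VD]] := iso y.
  have [z [Dz Vz]] := Dy V (open_nbhs_nbhs (conj oV Vy)).
  by rewrite -(VD z Vz Dz).
have ha n : exists a, Xs a (x n).
  have : [set: X] (x n) by [].
  by rewrite XsU => -[a _ Xa]; exists a.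
have [a ha'] := choice ha.
have [b hb] : exists b, forall s, range a s -> lt s b.
  apply: omega1_bound => //.
  apply: sub_countable (card_image_le _ _) _; exact: countableP.
have DXb : D `<=` Xs b.
  move=> _ [n _ <-]; apply: (Xsc (hb _ (ex_intro2 _ _ n Logic.I erefl))).
  exact: subset_closure.
pose K := closure (Xs b).
have cK : closed K := @closed_closure _ _.
have nK : normal_space (subspace K) := subspace_normal rX (@Xsl b) cK.
pose t (y : X) : Rdefinitions.R := 1 - ((N y).+1%:R)^-1.
have r0 y : 0 < ((N y).+1%:R : Rdefinitions.R)^-1 by rewrite invr_gt0 ltr0n.
have r1 y : ((N y).+1%:R : Rdefinitions.R)^-1 <= 1.
  by rewrite invf_le1 ?ltr0n // ler1n.
have t1 y : `|t y| <= 1.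
  rewrite ler_norml /t; have := r0 y; have := r1 y.
  set r := _^-1 => ? ?; apply/andP; split; lra.
have tlt1 y : t y < 1.
  by rewrite /t; have := r0 y; set r := _^-1 => ?; lra.
have cD' : closed (D : set (subspace K)) by apply: closed_subspaceW.
have wt : {within (D : set (subspace K)), continuous (t : subspace K -> _)}.
  apply: within_discrete => y _; have [V [oV Vy VD]] := iso y.
  by exists V; split => //; apply: open_subspaceW.
have [g [gt gc gb]] := @continuous_bounded_extension (subspace K) Rdefinitions.R nK D cD' t 1 ltr01
  wt (fun y _ => t1 y).
pose Z := [set y : subspace K | 1 <= g y].
have cZ : closed Z.
  by move: gc => /continuous_closedP /(_ _ (@closed_ge _ 1)).
pose C := K `&` ~` Xs b.
have cC : closed C by apply: closedI => //; exact: open_closedC.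
have cC' : closed (C : set (subspace K)) by apply: closed_subspaceW.
have gD y : D y -> g y = t y by move=> Dy; rewrite -gt //; apply: mem_set.
have ZCD : (Z `|` C) `&` D = set0.
  apply/disjoints_subset => y [Zy|[_ nXy]] Dy.
    by move: Zy; rewrite /Z /= gD // => /(lt_le_trans (tlt1 y)); rewrite ltxx.
  have Xy : Xs b y by apply: DXb.
  by apply: nXy.
have [v [vc v0 v1 v01]] := @urysohn_ext_itv (subspace K) Rdefinitions.R nK (Z `|` C) D 0 1
  (closedU cZ cC') cD' ZCD ltr01.
have vZC y : (Z `|` C) y -> v y = 0 by move=> ZCy; apply: v0; exists y.
have vD y : D y -> v y = 1 by move=> Dy; apply: v1; exists y.
have vr y : 0 <= v y <= 1.
  by have := v01 (v y) (ex_intro2 _ _ y Logic.I erefl); rewrite /= in_itv.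
pose H y := g y * v y.
have Hlt y : H y < 1.
  rewrite /H; have [Zy|nZy] := pselect (Z y).
    by rewrite vZC ?mulr0 //; left.
  have gy1 : g y < 1 by rewrite ltNge; apply/negP => gy; apply: nZy.
  have /andP [v0' v1'] := vr y.
  by have [g0|g0] := leP 0 (g y); nra.
pose F y := (1 - H y)^-1.
have Fc : continuous (F : subspace K -> Rdefinitions.R).
  move=> y; apply: (@continuousV _ (subspace K) (fun y => 1 - H y) y).
    by rewrite subr_eq0; apply/negP => /eqP H1; have := Hlt y; rewrite -H1 ltxx.
  apply: continuousB; first exact: cvg_cst.
  by apply: continuousM; [exact: gc|exact: vc].
pose G y := if pselect (Xs b y) then F y else 1.
have Gc : continuous G.
  apply/continuous_subspace_setT.
  have -> : [set: X] = K `|` ~` Xs b.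
    apply/seteqP; split => y // _; have [Xy|nXy] := pselect (Xs b y).
      by left; apply: subset_closure.
    by right.
  apply: withinU_continuous => //; first exact: open_closedC.
    apply: (@subspace_eq_continuous _ _ _ F) => // y /set_mem Ky.
    rewrite /from_subspace /G; case: (pselect (Xs b y)) => // nXy.
    by rewrite /F /H vZC ?mulr0 ?subr0 ?invr1 //; right.
  apply: (@subspace_eq_continuous _ (~` Xs b) _ (fun=> (1 : Rdefinitions.R))); last by move=> ?; exact: cvg_cst.
  by move=> y /set_mem nXy; rewrite /from_subspace /G; case: (pselect (Xs b y)).
have [M hM] := pX Gc.
pose n := Num.Def.archi_bound `|M|.
have Mn : M < n%:R.
  apply: le_lt_trans (ler_norm M) _; apply: archi_boundP; exact: normr_ge0.
have Gxn : G (x n) = (N (x n)).+1%:R.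
  have Dxn : D (x n) by exists n.
  have Xxn := DXb (x n) Dxn.
  rewrite /G; destruct (pselect (Xs b (x n))) as [pX1|nX]; last by [].
  rewrite /F /H gD // vD // mulr1 /t opprB addrCA subrr addr0 invrK //.
have := hM (x n); rewrite Gxn ger0_norm ?ler0n // => hle.
have : (n%:R : Rdefinitions.R) < (N (x n)).+1%:R by rewrite ltr_nat; apply: ltnW; rewrite ltnS.
move=> h; have := lt_trans Mn h; rewrite ltNge hle //.
Qed.
End CC.


Section Fin.
Context (X : topologicalType) (hX : hausdorff_space X)
  (I : Type) (lt : I -> I -> Prop) (Xs : I -> set X)
  (om : omega1_order lt) (Xso : forall a, open (Xs a))
  (Xsc : forall a b, lt a b -> closure (Xs a) `<=` Xs b)
  (Xsl : forall a, lindelof (closure (Xs a)))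
  (XsU : [set: X] = \bigcup_(a in [set: I]) Xs a)
  (Xsn : forall a, Xs a <> [set: X])
  (ccX : countably_compact X).

Lemma lind_sub (Z : set X) : lindelof Z -> exists a, Z `<=` Xs a.
Proof.
move=> lZ.
have ha (y : X) : exists a, Xs a y.
  have : [set: X] y by [].
  by rewrite XsU => -[a _ Xa]; exists a.
have [a ha'] := choice ha.
have [D' [_ cD'] ZD'] := lZ X Z (fun y => Xs (a y)) (fun y _ => Xso (a y))
  (fun y Zy => ex_intro2 _ _ y Zy (ha' y)).
have [b hb] : exists b, forall s, (a @` D') s -> lt s b.
  apply: omega1_bound => //; exact: sub_countable (card_image_le _ _) cD'.
exists b => y /ZD' [z D'z Xz]; apply: (@Xsc (a z) b (hb _ (ex_intro2 _ _ z D'z erefl))).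
exact: subset_closure.
Qed.

Lemma sub_Xs_closure a b : lt a b -> Xs a `<=` closure (Xs b).
Proof. by move=> ab y Xy; apply: subset_closure; apply: (@Xsc a b ab); apply: subset_closure. Qed.

Lemma two_bound a1 a2 : exists b, Xs a1 `<=` Xs b /\ Xs a2 `<=` Xs b.
Proof.
have [_ [irr tr tri _ _]] := om.
have [h|<-|h] := tri a1 a2.
- by exists a2; split => // y Xy; apply: (@Xsc a1 a2 h); apply: subset_closure.
- by exists a1; split.
- by exists a1; split => // y Xy; apply: (@Xsc a2 a1 h); apply: subset_closure.
Qed.

Lemma big_compact (Z : set X) : lindelof Z ->
  exists K, [/\ compact K, lindelof K, Z `<=` K & exists p, ~ K p].
Proof.
move=> /lind_sub [a Za].
have [c hc] : exists c, forall s, [set a] s -> lt s c.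
  by apply: omega1_bound => //; exact: countable1.
exists (closure (Xs a)); split.
- apply: cc_lindelof_compact => //; exact: closed_closure.
- exact: (@Xsl a).
- by move=> y /Za; apply: subset_closure.
- have : Xs c <> [set: X] := @Xsn c.
  move=> nf; apply: contrapT => H; apply: nf; apply/seteqP; split => // y _.
  apply: (@Xsc a c (hc a erefl)); apply: contrapT => ny; apply: H; by exists y.
Qed.

Lemma fixed_closed (r : X -> X) : continuous r -> closed [set z | r z = z].
Proof.
move=> rc y cy; apply: contrapT => ry.
have [[U V] [/= Uy Vry] [oU oV UV]] : exists UV : set X * set X,
    [/\ UV.1 y, UV.2 (r y) & [/\ open UV.1, open UV.2 & UV.1 `&` UV.2 = set0]].
  have yr : y != r y by apply/eqP => e; apply: ry; exact: (esym e).
  move: hX; rewrite open_hausdorff => /(_ _ _ yr) [[U V] [/= /set_mem Uy /set_mem Vr] [oU oV /eqP UV]].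
  by exists (U, V).
have nb : nbhs y (U `&` r @^-1` V).
  apply: filterI; first exact: open_nbhs_nbhs.
  by apply: rc; exact: open_nbhs_nbhs.
have [z [rz [Uz Vrz]]] := cy _ nb.
have : (U `&` V) z by split => //; rewrite -rz.
by rewrite UV.
Qed.


Context (Y : topologicalType).

Lemma EC_equiv : EC X Y <-> EC_cpt X Y.
Proof.
split => H f fc; have [Z [sZ [y fZ]]] := H f fc.
  have [K [cK lK ZK [p nKp]]] := big_compact sZ.
  exists K; split => //; exists y; apply/seteqP; split.
    by move=> _ [z nKz <-]; rewrite -fZ; exists z => // Zz; apply/nKz/ZK.
  move=> _ ->; have : [set y] (f p) by rewrite -fZ; exists p => // Zp; apply/nKp/ZK.
  by move=> fpy; exists p.
by exists Z; split; [exact: compact_lindelof|exists y].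
Qed.

Lemma S_equiv : S X Y <-> S_cpt X Y.
Proof.
split => H f fc; have [Z [sZ [r [rc rZ rid rf]]]] := H f fc.
  exists Z; split; last by exists r.
  have ZE : Z = [set z | r z = z].
    apply/seteqP; split => z; first exact: rid.
    by move=> /= <-; apply: rZ.
  apply: cc_lindelof_compact => //.
  by rewrite ZE; apply: fixed_closed.
by exists Z; split; [exact: compact_lindelof|exists r].
Qed.

Lemma L_equiv : L X Y <-> L_cpt X Y.
Proof.
split => H f fc; have [Z [sZ fZ]] := H f fc.
  have [K [cK lK ZK _]] := big_compact sZ.
  exists K; split => //; apply/seteqP; split.
    by move=> _ [z _ <-]; exists z.
  by rewrite -fZ => _ [z Zz <-]; exists z => //; apply: ZK.
by exists Z; split => //; exact: compact_lindelof.
Qed.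

Lemma BR_equiv : BR X Y <-> BR_cpt X Y.
Proof.
split => H f fc; have [Z [sZ hZ]] := H f fc.
  have [K [cK lK ZK _]] := big_compact sZ.
  exists K; split => // W cW KW.
  rewrite (hZ W (compact_lindelof cW) (subset_trans ZK KW)).
  by rewrite (hZ K lK ZK).
have lZ := compact_lindelof sZ.
exists Z; split => // W lW ZW.
have [a1 Za1] := lind_sub lZ.
have [a2 Wa2] := lind_sub lW.
have [b [ab1 ab2]] := two_bound a1 a2.
pose K := closure (Xs b).
have cK : compact K.
  apply: cc_lindelof_compact => //; [exact: closed_closure|exact: (@Xsl b)].
have ZK : Z `<=` K by move=> z /Za1 /ab1; apply: subset_closure.
have WK : W `<=` K by move=> z /Wa2 /ab2; apply: subset_closure.
have hK := hZ K cK ZK.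
apply/seteqP; split.
  by move=> _ [w nWw <-]; exists w => // Zw; apply/nWw/ZW.
by rewrite -hK => _ [k nKk <-]; exists k => // Wk; apply: nKk; apply: WK.
Qed.

End Fin.

Theorem theorem9p4 (X Y : topologicalType) :
  hausdorff_space X -> regular_space X -> typeI X -> pseudocompact X ->
  hausdorff_space Y ->
  [/\ countably_compact X,
      (EC X Y <-> EC_cpt X Y),
      (S X Y <-> S_cpt X Y),
      (L X Y <-> L_cpt X Y) &
      (BR X Y <-> BR_cpt X Y)].
Proof.
move=> hX rX [I [lt [Xs [om [Xso Xsc Xsl XsU Xsn]]]]] pX _.
have ccX : countably_compact X by apply: typeI_cc; eassumption.
split => //.
- by apply: EC_equiv; eassumption.
- by apply: S_equiv; eassumption.
- by apply: L_equiv; eassumption.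
- by apply: BR_equiv; eassumption.
Qed.
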